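(* For any alphabet $\Sigma$, the category of transition systems labelled on $\Sigma$ (the full subcategory of $\mathcal{G}/\Sigma$ on the transition systems) is a quasitopos.
   Context: $\mathcal{G}$ is the topos of graphs: a graph has a set of nodes, a set of arcs and source/target maps (parallel arcs and self-loops allowed), and morphisms preserve source and target. For a set $\Sigma$, also denote by $\Sigma$ the graph with one node and arc set $\Sigma$; the slice category $\mathcal{G}/\Sigma$ consists of graphs with arcs labelled by elements of $\Sigma$ and label-preserving graph morphisms. A transition system labelled on $\Sigma$ is such a labelled graph in which, for every pair of nodes $x,y$ and every $\alpha\in\Sigma$, there is at most one arc from $x$ to $y$ labelled $\alpha$. *)

(* Defs.v *)
From Stdlib Require Import ProofIrrelevance FunctionalExtensionality.

Set Implicit Arguments.

Record Category := {
  Ob :> Type;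
  Hom : Ob -> Ob -> Type;
  idm : forall A, Hom A A;
  comp : forall A B D, Hom B D -> Hom A B -> Hom A D;
  comp_assoc : forall A B D E (h : Hom D E) (g : Hom B D) (f : Hom A B),
      comp h (comp g f) = comp (comp h g) f;
  comp_id_l : forall A B (f : Hom A B), comp (idm B) f = f;
  comp_id_r : forall A B (f : Hom A B), comp f (idm A) = f
}.

Arguments Hom {c} A B.
Arguments idm {c} A.
Arguments comp {c A B D} g f.

Section Notions.
Variable C : Category.

Definition is_terminal (T : C) : Prop :=
  forall X : C, exists f : Hom X T, forall g : Hom X T, g = f.

Definition is_initial (I : C) : Prop :=
  forall X : C, exists f : Hom I X, forall g : Hom I X, g = f.

Definition is_product {A B P : C} (p1 : Hom P A) (p2 : Hom P B) : Prop :=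
  forall (Z : C) (f : Hom Z A) (g : Hom Z B),
    exists h : Hom Z P, (comp p1 h = f /\ comp p2 h = g) /\
      forall h' : Hom Z P, comp p1 h' = f /\ comp p2 h' = g -> h' = h.

Definition is_coproduct {A B S : C} (i1 : Hom A S) (i2 : Hom B S) : Prop :=
  forall (Z : C) (f : Hom A Z) (g : Hom B Z),
    exists h : Hom S Z, (comp h i1 = f /\ comp h i2 = g) /\
      forall h' : Hom S Z, comp h' i1 = f /\ comp h' i2 = g -> h' = h.

Definition is_equalizer {X Y : C} (f g : Hom X Y) {E : C} (e : Hom E X) : Prop :=
  comp f e = comp g e /\
  forall (Z : C) (h : Hom Z X), comp f h = comp g h ->
    exists u : Hom Z E, comp e u = h /\
      forall u' : Hom Z E, comp e u' = h -> u' = u.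

Definition is_coequalizer {X Y : C} (f g : Hom X Y) {Q : C} (q : Hom Y Q) : Prop :=
  comp q f = comp q g /\
  forall (Z : C) (h : Hom Y Z), comp h f = comp h g ->
    exists u : Hom Q Z, comp u q = h /\
      forall u' : Hom Q Z, comp u' q = h -> u' = u.

Definition is_pullback {X Y Z : C} (f : Hom X Z) (g : Hom Y Z)
    {P : C} (p1 : Hom P X) (p2 : Hom P Y) : Prop :=
  comp f p1 = comp g p2 /\
  forall (W : C) (a : Hom W X) (b : Hom W Y), comp f a = comp g b ->
    exists h : Hom W P, (comp p1 h = a /\ comp p2 h = b) /\
      forall h' : Hom W P, comp p1 h' = a /\ comp p2 h' = b -> h' = h.

Definition has_terminal : Prop := exists T : C, is_terminal T.
Definition has_initial : Prop := exists I : C, is_initial I.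
Definition has_binary_products : Prop :=
  forall A B : C, exists (P : C) (p1 : Hom P A) (p2 : Hom P B), is_product p1 p2.
Definition has_binary_coproducts : Prop :=
  forall A B : C, exists (S : C) (i1 : Hom A S) (i2 : Hom B S), is_coproduct i1 i2.
Definition has_equalizers : Prop :=
  forall (X Y : C) (f g : Hom X Y), exists (E : C) (e : Hom E X), is_equalizer f g e.
Definition has_coequalizers : Prop :=
  forall (X Y : C) (f g : Hom X Y), exists (Q : C) (q : Hom Y Q), is_coequalizer f g q.

Definition has_finite_limits : Prop :=
  has_terminal /\ has_binary_products /\ has_equalizers.

Definition has_finite_colimits : Prop :=
  has_initial /\ has_binary_coproducts /\ has_coequalizers.

Definition is_exponential {A B E P : C} (pi1 : Hom P E) (pi2 : Hom P A)
    (ev : Hom P B) : Prop :=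
  is_product pi1 pi2 /\
  forall (Z Q : C) (q1 : Hom Q Z) (q2 : Hom Q A), is_product q1 q2 ->
    forall g : Hom Q B,
      exists h : Hom Z E,
        (exists k : Hom Q P, comp pi1 k = comp h q1 /\ comp pi2 k = q2 /\
                             comp ev k = g) /\
        forall h' : Hom Z E,
          (exists k : Hom Q P, comp pi1 k = comp h' q1 /\ comp pi2 k = q2 /\
                               comp ev k = g) -> h' = h.

Definition has_exponentials : Prop :=
  forall A B : C, exists (E P : C) (pi1 : Hom P E) (pi2 : Hom P A) (ev : Hom P B),
    is_exponential pi1 pi2 ev.

Definition cartesian_closed : Prop :=
  has_terminal /\ has_binary_products /\ has_exponentials.

Definition regular_mono {A X : C} (m : Hom A X) : Prop :=
  exists (Y : C) (f g : Hom X Y), is_equalizer f g m.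

Definition has_regular_subobject_classifier : Prop :=
  exists (T : C) (Omega : C) (tru : Hom T Omega),
    is_terminal T /\ regular_mono tru /\
    forall (A X : C) (m : Hom A X), regular_mono m ->
      exists chi : Hom X Omega,
        (exists t : Hom A T, is_pullback chi tru m t) /\
        forall chi' : Hom X Omega,
          (exists t : Hom A T, is_pullback chi' tru m t) -> chi' = chi.

End Notions.
Arguments is_terminal {C} T.
Arguments is_initial {C} I.


Section Slice.
Variables (C : Category) (X : C).

Definition slice_ob := { A : C & Hom A X }.
Definition slice_hom (a b : slice_ob) :=
  { h : Hom (projT1 a) (projT1 b) | comp (projT2 b) h = projT2 a }.

Definition slice_id (a : slice_ob) : slice_hom a a :=
  exist _ (idm (projT1 a)) (@comp_id_r C _ _ (projT2 a)).

Definition slice_comp (a b d : slice_ob) (g : slice_hom b d) (f : slice_hom a b)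
  : slice_hom a d.
Proof.
  exists (comp (proj1_sig g) (proj1_sig f)).
  rewrite comp_assoc, (proj2_sig g). exact (proj2_sig f).
Defined.

Lemma slice_hom_eq (a b : slice_ob) (f g : slice_hom a b) :
  proj1_sig f = proj1_sig g -> f = g.
Proof.
  destruct f as [f pf], g as [g pg]; simpl; intros ->.
  f_equal; apply proof_irrelevance.
Qed.

Definition slice : Category.
Proof.
  refine (@Build_Category slice_ob slice_hom slice_id slice_comp _ _ _);
  intros; apply slice_hom_eq; simpl;
  [apply comp_assoc | apply comp_id_l | apply comp_id_r].
Defined.

End Slice.

Definition locally_cartesian_closed (C : Category) : Prop :=
  forall X : C, cartesian_closed (slice C X).

Definition quasitopos (C : Category) : Prop :=
  has_finite_limits C /\ has_finite_colimits C /\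
  locally_cartesian_closed C /\ has_regular_subobject_classifier C.

(** * Graphs labelled on Sigma, i.e. objects of G / Sigma *)

Record LGraph (Sigma : Type) := {
  nodes : Type;
  arcs : Type;
  src : arcs -> nodes;
  tgt : arcs -> nodes;
  lab : arcs -> Sigma
}.

Record LHom (Sigma : Type) (G H : LGraph Sigma) := {
  nmap : nodes G -> nodes H;
  amap : arcs G -> arcs H;
  hom_src : forall a, src H (amap a) = nmap (src G a);
  hom_tgt : forall a, tgt H (amap a) = nmap (tgt G a);
  hom_lab : forall a, lab H (amap a) = lab G a
}.

Lemma LHom_ext (Sigma : Type) (G H : LGraph Sigma) (f g : LHom G H) :
  nmap f = nmap g -> amap f = amap g -> f = g.
Proof.
  destruct f, g; simpl; intros -> ->; f_equal; apply proof_irrelevance.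
Qed.

Definition LHom_id (Sigma : Type) (G : LGraph Sigma) : LHom G G :=
  @Build_LHom Sigma G G (fun x => x) (fun a => a)
    (fun a => eq_refl) (fun a => eq_refl) (fun a => eq_refl).

Definition LHom_comp (Sigma : Type) (G H K : LGraph Sigma)
  (g : LHom H K) (f : LHom G H) : LHom G K.
Proof.
  refine (@Build_LHom Sigma G K (fun x => nmap g (nmap f x))
                                (fun a => amap g (amap f a)) _ _ _); intro a.
  - rewrite hom_src, hom_src; reflexivity.
  - rewrite hom_tgt, hom_tgt; reflexivity.
  - rewrite hom_lab, hom_lab; reflexivity.
Defined.

Definition is_transition_system (Sigma : Type) (G : LGraph Sigma) : Prop :=
  forall a b : arcs G, src G a = src G b -> tgt G a = tgt G b ->
                       lab G a = lab G b -> a = b.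

Definition TSys (Sigma : Type) := { G : LGraph Sigma | is_transition_system G }.

Definition TS_cat (Sigma : Type) : Category.
Proof.
  refine (@Build_Category (TSys Sigma)
            (fun G H => LHom (proj1_sig G) (proj1_sig H))
            (fun G => LHom_id (proj1_sig G))
            (fun G H K g f => LHom_comp g f) _ _ _);
  intros; apply LHom_ext; reflexivity.
Defined.

(* Main.v *)
Require Import Defs.
From Stdlib Require Import ProofIrrelevance FunctionalExtensionality ClassicalEpsilon PropExtensionality.

Section TS.
Variable Sigma : Type.
Notation C := (TS_cat Sigma).

Definition adj (G : LGraph Sigma) (x y : nodes G) (l : Sigma) : Prop :=
  exists a, src G a = x /\ tgt G a = y /\ lab G a = l.

Lemma hom_adj (G H : LGraph Sigma) (f : LHom G H) x y l :
  adj G x y l -> adj H (nmap f x) (nmap f y) l.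
Proof.
  intros [a [<- [<- <-]]]. exists (amap f a).
  rewrite hom_src, hom_tgt, hom_lab. auto.
Qed.

Lemma TS_hom_ext (G H : C) (f g : Hom G H) :
  (forall x, nmap f x = nmap g x) -> f = g.
Proof.
  intro E. assert (E' : nmap f = nmap g) by (apply functional_extensionality; exact E).
  apply LHom_ext; [exact E'|].
  apply functional_extensionality; intro a.
  apply (proj2_sig H).
  - rewrite !hom_src, E'; reflexivity.
  - rewrite !hom_tgt, E'; reflexivity.
  - rewrite !hom_lab; reflexivity.
Qed.

Definition mkhom (G H : LGraph Sigma) (f : nodes G -> nodes H)
  (Hf : forall x y l, adj G x y l -> adj H (f x) (f y) l) : LHom G H.
Proof.
  refine (@Build_LHom Sigma G H f
    (fun a => proj1_sig (constructive_indefinite_description _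
        (Hf _ _ _ (ex_intro _ a (conj eq_refl (conj eq_refl eq_refl)))))) _ _ _);
  intro a; destruct (constructive_indefinite_description _ _) as [b [H1 [H2 H3]]];
  simpl; assumption.
Defined.

Lemma nmap_mkhom G H f Hf x : nmap (@mkhom G H f Hf) x = f x.
Proof. reflexivity. Qed.

Definition mkG (N : Type) (E : N -> N -> Sigma -> Prop) : LGraph Sigma :=
  {| nodes := N;
     arcs := {t : N * N * Sigma | E (fst (fst t)) (snd (fst t)) (snd t)};
     src := fun a => fst (fst (proj1_sig a));
     tgt := fun a => snd (fst (proj1_sig a));
     lab := fun a => snd (proj1_sig a) |}.

Lemma mkG_TS N E : is_transition_system (mkG N E).
Proof.
  intros [[[x y] l] p] [[[x' y'] l'] p']; simpl; intros -> -> ->.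
  f_equal; apply proof_irrelevance.
Qed.

Lemma adj_mkG N E x y l : adj (mkG N E) x y l <-> E x y l.
Proof.
  split.
  - intros [[[[x' y'] l'] p] [H1 [H2 H3]]]; simpl in *; subst; exact p.
  - intro p. exists (exist _ (x, y, l) p). simpl; auto.
Qed.

Definition mkTS N E : C := exist _ (mkG N E) (mkG_TS N E).

Definition N (A : C) := nodes (proj1_sig A).
Definition adjC (A : C) := adj (proj1_sig A).

Lemma adjC_mkTS M E x y l : adjC (mkTS M E) x y l <-> E x y l.
Proof. apply adj_mkG. Qed.

Definition hom (A B : C) (f : N A -> N B)
  (Hf : forall x y l, adjC A x y l -> adjC B (f x) (f y) l) : Hom A B :=
  @mkhom (proj1_sig A) (proj1_sig B) f Hf.

Lemma homA (A B : C) (f : Hom A B) x y l : adjC A x y l -> adjC B (nmap f x) (nmap f y) l.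
Proof. apply hom_adj. Qed.

Lemma comp_nmap (A B D : C) (g : Hom B D) (f : Hom A B) x :
  nmap (comp g f) x = nmap g (nmap f x).
Proof. reflexivity. Qed.

Lemma id_nmap (A : C) x : nmap (idm A) x = x.
Proof. reflexivity. Qed.


Definition termO : C := mkTS unit (fun _ _ _ => True).

Lemma termO_terminal : is_terminal termO.
Proof.
  intro X. unshelve eexists (hom X termO (fun _ => tt) _).
  - intros; apply adjC_mkTS; exact I.
  - intro g; apply TS_hom_ext; intro x; destruct (nmap g x), (nmap _ x); reflexivity.
Qed.

Lemma has_term : has_terminal C.
Proof. exists termO; apply termO_terminal. Qed.

Definition initO : C := mkTS Empty_set (fun _ _ _ => False).

Lemma has_init : has_initial C.
Proof.
  exists initO. intro X. unshelve eexists (hom initO X (fun e => match e with end) _).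
  - intros x; destruct x.
  - intro g; apply TS_hom_ext; intro x; destruct x.
Qed.

Definition prodE (A B : C) (x y : N A * N B) l := adjC A (fst x) (fst y) l /\ adjC B (snd x) (snd y) l.
Definition prodO (A B : C) : C := mkTS (N A * N B) (@prodE A B).

Definition pr1 (A B : C) : Hom (prodO A B) A.
Proof. unshelve refine (hom (prodO A B) A fst _). intros x y l H; apply (adjC_mkTS _ (@prodE A B)) in H; apply H. Defined.
Definition pr2 (A B : C) : Hom (prodO A B) B.
Proof. unshelve refine (hom (prodO A B) B snd _). intros x y l H; apply (adjC_mkTS _ (@prodE A B)) in H; apply H. Defined.

Lemma prod_is_product (A B : C) : is_product C (pr1 A B) (pr2 A B).
Proof.
  intros Z f g. unshelve eexists (hom Z (prodO A B) (fun z => (nmap f z, nmap g z)) _).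
  - intros x y l H; apply adjC_mkTS; split; apply homA; exact H.
  - split; [split; apply TS_hom_ext; reflexivity|].
    intros h' [E1 E2]; apply TS_hom_ext; intro x; subst f g; simpl.
    apply surjective_pairing.
Qed.

Lemma has_prod : has_binary_products C.
Proof. intros A B; exists (prodO A B), (pr1 A B), (pr2 A B); apply prod_is_product. Qed.

Definition coprE (A B : C) (x y : N A + N B) l := match x, y with
     | inl a, inl a' => adjC A a a' l
     | inr b, inr b' => adjC B b b' l
     | _, _ => False end.
Definition coprO (A B : C) : C := mkTS (N A + N B) (@coprE A B).

Lemma has_coprod : has_binary_coproducts C.
Proof.
  intros A B. exists (coprO A B).
  unshelve eexists (hom A (coprO A B) inl _);
  [intros; apply adjC_mkTS; assumption|].
  unshelve eexists (hom B (coprO A B) inr _);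
  [intros; apply adjC_mkTS; assumption|].
  intros Z f g.
  unshelve eexists (hom (coprO A B) Z (fun s => match s with inl a => nmap f a | inr b => nmap g b end) _).
  - intros [a|b] [a'|b'] l H; apply (adjC_mkTS _ (@coprE A B)) in H; simpl in H; try contradiction; apply homA; exact H.
  - split; [split; apply TS_hom_ext; reflexivity|].
    intros h' [E1 E2]; apply TS_hom_ext; intros [a|b]; subst f g; reflexivity.
Qed.

Definition eqE {X Y : C} (f g : Hom X Y) (x y : {x : N X | nmap f x = nmap g x}) l := adjC X (proj1_sig x) (proj1_sig y) l.
Definition eqO {X Y : C} (f g : Hom X Y) : C := mkTS _ (@eqE X Y f g).

Definition eqIncl {X Y : C} (f g : Hom X Y) : Hom (eqO (X:=X) (Y:=Y) f g) X.
Proof. unshelve refine (hom (eqO (X:=X) (Y:=Y) f g) X (@proj1_sig _ _) _). intros x y l H; apply (adjC_mkTS _ (@eqE X Y f g)) in H; exact H. Defined.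

Lemma eq_is_equalizer (X Y : C) (f g : Hom X Y) : is_equalizer C f g (eqIncl f g).
Proof.
  split.
  - apply TS_hom_ext; intros [x p]; exact p.
  - intros Z h Hh.
    assert (Hx : forall z, nmap f (nmap h z) = nmap g (nmap h z)).
    { intro z. change (nmap (comp f h) z = nmap (comp g h) z). rewrite Hh; reflexivity. }
    unshelve eexists (hom Z (eqO (X:=X) (Y:=Y) f g) (fun z => exist _ (nmap h z) (Hx z)) _).
    + intros x y l H; apply adjC_mkTS; apply homA; exact H.
    + split; [apply TS_hom_ext; reflexivity|].
      intros u' Hu; apply TS_hom_ext; intro z; subst h.
      apply eq_sig_hprop; [intros; apply proof_irrelevance|]. reflexivity.
Qed.

Lemma has_eq : has_equalizers C.
Proof. intros X Y f g; exists (eqO (X:=X) (Y:=Y) f g), (eqIncl f g); apply eq_is_equalizer. Qed.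


Section Coeq.
Context {X Y : C} (f g : Hom X Y).

Definition R (y z : N Y) : Prop :=
  forall S : N Y -> N Y -> Prop, (forall a, S a a) -> (forall a b, S a b -> S b a) ->
    (forall a b c, S a b -> S b c -> S a c) -> (forall x, S (nmap f x) (nmap g x)) -> S y z.

Lemma R_refl a : R a a. Proof. intros S r s t b; apply r. Qed.
Lemma R_sym a b : R a b -> R b a. Proof. intros H S r s t b'; apply s, H; auto. Qed.
Lemma R_trans a b c : R a b -> R b c -> R a c.
Proof. intros H1 H2 S r s t b'; apply (t a b c); [apply H1|apply H2]; auto. Qed.
Lemma R_gen x : R (nmap f x) (nmap g x). Proof. intros S r s t b'; apply b'. Qed.

Definition Qt := {P : N Y -> Prop | exists y, P = R y}.
Definition cls (y : N Y) : Qt := exist _ (R y) (ex_intro _ y eq_refl).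

Lemma cls_eq a b : R a b -> cls a = cls b.
Proof.
  intro H. apply eq_sig_hprop; [intros; apply proof_irrelevance|]. simpl.
  apply functional_extensionality; intro z; apply propositional_extensionality; split; intro H'.
  - eapply R_trans; [apply R_sym, H| exact H'].
  - eapply R_trans; [apply H| exact H'].
Qed.

Definition rep (p : Qt) : N Y := proj1_sig (constructive_indefinite_description _ (proj2_sig p)).

Lemma rep_R y : R (rep (cls y)) y.
Proof.
  unfold rep. destruct (constructive_indefinite_description _ _) as [y' Hy']. simpl in *.
  rewrite <- Hy'. apply R_refl.
Qed.

Lemma cls_rep p : cls (rep p) = p.
Proof.
  unfold rep. destruct (constructive_indefinite_description _ _) as [y' Hy'].
  apply eq_sig_hprop; [intros; apply proof_irrelevance|]. simpl. symmetry; exact Hy'.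
Qed.

Definition coqE (p q : Qt) l := exists y1 y2, cls y1 = p /\ cls y2 = q /\ adjC Y y1 y2 l.
Definition coqO : C := mkTS Qt coqE.

Definition coqmap : Hom Y coqO.
Proof.
  unshelve refine (hom Y coqO cls _).
  intros x y l H; apply adjC_mkTS; exists x, y; auto.
Defined.

Lemma coq_is_coequalizer : is_coequalizer C f g coqmap.
Proof.
  split.
  - apply TS_hom_ext; intro x; apply cls_eq, R_gen.
  - intros Z h Hh.
    assert (Hr : forall a b, R a b -> nmap h a = nmap h b).
    { intros a b H; apply (H (fun a b => nmap h a = nmap h b)); intros; try congruence.
      change (nmap (comp h f) x = nmap (comp h g) x); rewrite Hh; reflexivity. }
    assert (Hu : forall y, nmap h (rep (cls y)) = nmap h y) by (intro; apply Hr, rep_R).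
    unshelve eexists (hom coqO Z (fun p => nmap h (rep p)) _).
    + intros p q l H; apply (adjC_mkTS _ coqE) in H.
      destruct H as [y1 [y2 [<- [<- H]]]]. rewrite !Hu. apply homA; exact H.
    + split; [apply TS_hom_ext; intro y; apply Hu|].
      intros u' Hu'; apply TS_hom_ext; intro p; subst h. simpl.
      rewrite <- (cls_rep p) at 1. reflexivity.
Qed.

End Coeq.

Lemma has_coeq : has_coequalizers C.
Proof. intros X Y f g; exists (coqO (X:=X) f g), (coqmap (X:=X) f g); apply coq_is_coequalizer. Qed.


Definition ptE (x y : unit) (l : Sigma) := False.
Definition ptO : C := mkTS unit ptE.
Definition pt (A : C) (a : N A) : Hom ptO A.
Proof. unshelve refine (hom ptO A (fun _ => a) _). intros x y l H; apply (adjC_mkTS _ ptE) in H; destruct H. Defined.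

Definition arcE (l : Sigma) (x y : bool) (l' : Sigma) := x = false /\ y = true /\ l' = l.
Definition arcO l : C := mkTS bool (arcE l).
Definition arcm {A : C} {l} {a a' : N A} (H : adjC A a a' l) : Hom (arcO l) A.
Proof.
  unshelve refine (hom (arcO l) A (fun b => if b then a' else a) _).
  intros x y l' H'; apply (adjC_mkTS _ (arcE l)) in H'. destruct H' as [-> [-> ->]]; exact H.
Defined.

Lemma regular_mono_props {A X : C} (m : Hom A X) : regular_mono C m ->
  (forall a a', nmap m a = nmap m a' -> a = a') /\
  (forall a a' l, adjC X (nmap m a) (nmap m a') l -> adjC A a a' l).
Proof.
  intros [Y [f [g [Heq Hu]]]].
  assert (Hfg : forall a, nmap f (nmap m a) = nmap g (nmap m a)).
  { intro a; change (nmap (comp f m) a = nmap (comp g m) a); rewrite Heq; reflexivity. }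
  assert (inj : forall a a', nmap m a = nmap m a' -> a = a').
  { intros a a' E.
    destruct (Hu ptO (pt X (nmap m a))) as [u [_ Hu']].
    - apply TS_hom_ext; intro; apply Hfg.
    - assert (E1 := Hu' (pt A a) (TS_hom_ext _ _ (comp m (pt A a)) (pt X (nmap m a)) (fun _ => eq_refl))).
      assert (E2 := Hu' (pt A a') (TS_hom_ext _ _ (comp m (pt A a')) (pt X (nmap m a)) (fun _ => eq_sym E))).
      change a with (nmap (pt A a) tt); rewrite E1, <- E2; reflexivity. }
  split; [exact inj|].
  intros a a' l H.
  destruct (Hu (arcO l) (arcm (A:=X) H)) as [u [Eu _]].
  - apply TS_hom_ext; intros []; apply Hfg.
  - assert (E0 : nmap u false = a) by (apply inj; change (nmap (comp m u) false = nmap m a); rewrite Eu; reflexivity).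
    assert (E1 : nmap u true = a') by (apply inj; change (nmap (comp m u) true = nmap m a'); rewrite Eu; reflexivity).
    rewrite <- E0, <- E1. apply homA. apply adjC_mkTS. unfold arcE; auto.
Qed.

Definition OmE (x y : bool) (l : Sigma) := True.
Definition OmO : C := mkTS bool OmE.
Definition tru : Hom termO OmO.
Proof. unshelve refine (hom termO OmO (fun _ => true) _). intros; apply adjC_mkTS; exact I. Defined.
Definition toTerm (A : C) : Hom A termO.
Proof. unshelve refine (hom A termO (fun _ => tt) _). intros; apply adjC_mkTS; exact I. Defined.

Lemma tru_regular : regular_mono C tru.
Proof.
  unshelve eexists OmO, (idm OmO), (hom OmO OmO (fun _ => true) _).
  - intros; apply adjC_mkTS; exact I.
  - split; [apply TS_hom_ext; reflexivity|].
    intros Z h Hh. exists (toTerm Z). split.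
    + apply TS_hom_ext; intro z.
      change (true = nmap (comp (idm OmO) h) z). rewrite Hh; reflexivity.
    + intros u' _; apply TS_hom_ext; intro z; destruct (nmap u' z), (nmap (toTerm Z) z); reflexivity.
Qed.

Lemma has_rsc : has_regular_subobject_classifier C.
Proof.
  exists termO, OmO, tru. split; [apply termO_terminal|]. split; [apply tru_regular|].
  intros A X m Hm. destruct (regular_mono_props m Hm) as [inj refl].
  unshelve eexists (hom X OmO (fun x => if excluded_middle_informative (exists a, nmap m a = x) then true else false) _).
  { intros; apply adjC_mkTS; exact I. }
  split.
  - exists (toTerm A). split.
    + apply TS_hom_ext; intro a; simpl.
      destruct (excluded_middle_informative _) as [_|n]; [reflexivity|].
      exfalso; apply n; exists a; reflexivity.
    + intros W a b Hab.
      assert (Hw : forall w, exists a0, nmap m a0 = nmap a w).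
      { intro w. assert (E : nmap (comp (hom X OmO _ _) a) w = nmap (comp tru b) w) by (rewrite Hab; reflexivity).
        simpl in E. destruct (excluded_middle_informative _) as [e|_]; [exact e|discriminate]. }
      unshelve eexists (hom W A (fun w => proj1_sig (constructive_indefinite_description _ (Hw w))) _).
      * intros x y l H. apply refl.
        destruct (constructive_indefinite_description _ (Hw x)) as [p1 E1].
        destruct (constructive_indefinite_description _ (Hw y)) as [p2 E2]. simpl.
        rewrite E1, E2. apply homA; exact H.
      * split; [split|].
        -- apply TS_hom_ext; intro w; simpl.
           destruct (constructive_indefinite_description _ (Hw w)) as [p1 E1]; exact E1.
        -- apply TS_hom_ext; intro w; destruct (nmap b w); reflexivity.
        -- intros h' [E1 _]; apply TS_hom_ext; intro w; apply inj. simpl.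
           destruct (constructive_indefinite_description _ (Hw w)) as [p1 E2]; simpl.
           rewrite E2. change (nmap (comp m h') w = nmap a w). rewrite E1; reflexivity.
  - intros chi' [t' [Hc Hpb]]. apply TS_hom_ext; intro x. simpl.
    destruct (excluded_middle_informative _) as [[a <-]|n].
    + change (nmap (comp chi' m) a = true). rewrite Hc; reflexivity.
    + assert (Ex : nmap chi' x <> true).
      { intro Ex. destruct (Hpb ptO (pt X x) (pt termO tt)) as [h [[E1 _] _]].
        * apply TS_hom_ext; intro; exact Ex.
        * apply n. exists (nmap h tt). change (nmap (comp m h) tt = x). rewrite E1; reflexivity. }
      exact (proj1 (Bool.not_true_iff_false _) Ex).
Qed.


Section LCC.
Variable X : C.
Notation S := (slice C X).

Definition sN (a : S) := N (projT1 a).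
Definition sp (a : S) (x : sN a) : N X := nmap (projT2 a) x.
Definition sh {a b : S} (f : Hom a b) : Hom (projT1 a) (projT1 b) := proj1_sig f.

Lemma sl_ext (a b : S) (f g : Hom a b) :
  (forall x, nmap (sh f) x = nmap (sh g) x) -> f = g.
Proof. intro H; apply slice_hom_eq, TS_hom_ext, H. Qed.

Lemma sl_eq_nodes {a b : S} {f g : Hom a b} : f = g -> forall x, nmap (sh f) x = nmap (sh g) x.
Proof. intros ->; reflexivity. Qed.

Lemma sl_comm {a b : S} (f : Hom a b) x : sp b (nmap (sh f) x) = sp a x.
Proof.
  unfold sp, sh. destruct f as [f Hf]; simpl.
  change (nmap (comp (projT2 b) f) x = nmap (projT2 a) x). rewrite Hf; reflexivity.
Qed.

Definition slhom (a b : S) (h : Hom (projT1 a) (projT1 b))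
  (H : forall x, sp b (nmap h x) = sp a x) : Hom a b :=
  exist _ h (TS_hom_ext _ _ (comp (projT2 b) h) (projT2 a) H).

Lemma sh_slhom a b h H : sh (@slhom a b h H) = h.
Proof. reflexivity. Qed.

Lemma sh_comp (a b d : S) (g : Hom b d) (f : Hom a b) : sh (comp g f) = comp (sh g) (sh f).
Proof. reflexivity. Qed.

Definition sterm : S := existT (fun A : C => Hom A X) X (idm X).

Lemma sl_has_term : has_terminal S.
Proof.
  exists sterm. intro a. exists (slhom a sterm (projT2 a) (fun _ => eq_refl)).
  intro g; apply sl_ext; intro x. exact (sl_comm g x).
Qed.

Section Pb.
Variables a b : S.
Definition pbN := {u : sN a * sN b | sp a (fst u) = sp b (snd u)}.
Definition pbE (u v : pbN) l :=
  adjC (projT1 a) (fst (proj1_sig u)) (fst (proj1_sig v)) l /\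
  adjC (projT1 b) (snd (proj1_sig u)) (snd (proj1_sig v)) l.
Definition pbT : C := mkTS pbN pbE.
Definition pbmap : Hom pbT X.
Proof.
  unshelve refine (hom pbT X (fun u => sp a (fst (proj1_sig u))) _).
  intros u v l H; apply (adjC_mkTS _ pbE) in H. apply homA, H.
Defined.
Definition pbO : S := existT (fun A : C => Hom A X) pbT pbmap.
Definition pb1 : Hom pbO a.
Proof.
  unshelve refine (slhom pbO a (hom pbT (projT1 a) (fun u => fst (proj1_sig u)) _) _).
  - intros u v l H; apply (adjC_mkTS _ pbE) in H; apply H.
  - intro; reflexivity.
Defined.
Definition pb2 : Hom pbO b.
Proof.
  unshelve refine (slhom pbO b (hom pbT (projT1 b) (fun u => snd (proj1_sig u)) _) _).
  - intros u v l H; apply (adjC_mkTS _ pbE) in H; apply H.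
  - intros [u Hu]; symmetry; exact Hu.
Defined.

Lemma pb_is_product : is_product S pb1 pb2.
Proof.
  intros Z f g.
  assert (Hz : forall z, sp a (nmap (sh f) z) = sp b (nmap (sh g) z))
    by (intro z; rewrite !sl_comm; reflexivity).
  unshelve eexists (slhom Z pbO (hom (projT1 Z) pbT (fun z => exist _ (nmap (sh f) z, nmap (sh g) z) (Hz z)) _) _).
  - intros x y l H; apply adjC_mkTS; split; apply homA; exact H.
  - intro z; simpl. apply (sl_comm f z).
  - split; [split; apply sl_ext; reflexivity|].
    intros h' [E1 E2]; apply sl_ext; intro z. subst f g.
    apply eq_sig_hprop; [intros; apply proof_irrelevance|]. simpl.
    apply surjective_pairing.
Qed.

Definition ptS (x : N X) : S := existT (fun A : C => Hom A X) ptO (pt X x).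
Definition arcS {l} {x x' : N X} (H : adjC X x x' l) : S := existT (fun A : C => Hom A X) (arcO l) (arcm H).

Variables (Q : S) (q1 : Hom Q a) (q2 : Hom Q b).
Hypothesis Hq : is_product S q1 q2.

Lemma prod_surj x y : sp a x = sp b y ->
  exists w, nmap (sh q1) w = x /\ nmap (sh q2) w = y.
Proof.
  intro E.
  destruct (Hq (ptS (sp a x)) (slhom (ptS (sp a x)) a (pt _ x) (fun _ => eq_refl))
                (slhom (ptS (sp a x)) b (pt _ y) (fun _ => eq_sym E))) as [h [[E1 E2] _]].
  exists (nmap (sh h) tt). split.
  - exact (sl_eq_nodes E1 tt).
  - exact (sl_eq_nodes E2 tt).
Qed.

Lemma prod_inj w w' : nmap (sh q1) w = nmap (sh q1) w' -> nmap (sh q2) w = nmap (sh q2) w' -> w = w'.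
Proof.
  intros E1 E2.
  assert (Ew : sp Q w' = sp Q w) by (rewrite <- !(sl_comm q1), E1; reflexivity).
  destruct (Hq (ptS (sp Q w)) (slhom (ptS (sp Q w)) a (pt _ (nmap (sh q1) w)) (fun _ => sl_comm q1 w))
                (slhom (ptS (sp Q w)) b (pt _ (nmap (sh q2) w)) (fun _ => sl_comm q2 w))) as [h [_ U]].
  assert (U1 := U (slhom (ptS (sp Q w)) Q (pt _ w) (fun _ => eq_refl))).
  assert (U2 := U (slhom (ptS (sp Q w)) Q (pt _ w') (fun _ => Ew))).
  change w with (nmap (sh (slhom (ptS (sp Q w)) Q (pt _ w) (fun _ => eq_refl))) tt).
  rewrite U1, <- U2; [reflexivity| |]; split; apply sl_ext; intros []; simpl; unfold sh in *; first [reflexivity | symmetry; assumption].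
Qed.

Lemma prod_adj w w' l : adjC (projT1 a) (nmap (sh q1) w) (nmap (sh q1) w') l ->
  adjC (projT1 b) (nmap (sh q2) w) (nmap (sh q2) w') l -> adjC (projT1 Q) w w' l.
Proof.
  intros H1 H2.
  assert (HX : adjC X (sp Q w) (sp Q w') l).
  { rewrite <- !(sl_comm q1). apply homA, H1. }
  destruct (Hq (arcS HX)
     (slhom (arcS HX) a (arcm H1) (fun x => match x with true => sl_comm q1 w' | false => sl_comm q1 w end))
     (slhom (arcS HX) b (arcm H2) (fun x => match x with true => sl_comm q2 w' | false => sl_comm q2 w end)))
    as [h [[E1 E2] _]].
  assert (F : nmap (sh h) false = w).
  { apply prod_inj; [exact (sl_eq_nodes E1 false)| exact (sl_eq_nodes E2 false)]. }
  assert (T : nmap (sh h) true = w').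
  { apply prod_inj; [exact (sl_eq_nodes E1 true)| exact (sl_eq_nodes E2 true)]. }
  assert (Hh := homA _ _ (sh h) false true l (proj2 (adjC_mkTS _ (arcE l) _ _ _) (conj eq_refl (conj eq_refl eq_refl)))).
  rewrite F, T in Hh; exact Hh.
Qed.

End Pb.

Lemma sl_has_prod : has_binary_products S.
Proof. intros a b; exists (pbO a b), (pb1 a b), (pb2 a b); apply pb_is_product. Qed.



Section Exp.
Variables a b : S.

Definition expN := {x : N X & {f : forall u : sN a, x = sp a u -> sN b |
                                 forall u H, sp b (f u H) = x}}.
Definition fun_of (e : expN) := proj1_sig (projT2 e).
Definition expE (e e' : expN) l :=
  adjC X (projT1 e) (projT1 e') l /\
  forall u u' H H', adjC (projT1 a) u u' l ->
     adjC (projT1 b) (fun_of e u H) (fun_of e' u' H') l.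
Definition expT : C := mkTS expN expE.
Definition expmap : Hom expT X.
Proof.
  unshelve refine (hom expT X (fun e => projT1 e) _).
  intros e e' l H; apply (adjC_mkTS _ expE) in H; apply H.
Defined.
Definition expO : S := existT (fun A : C => Hom A X) expT expmap.

Lemma expN_eq (e e' : expN) : projT1 e = projT1 e' ->
  (forall u H H', fun_of e u H = fun_of e' u H') -> e = e'.
Proof.
  destruct e as [x [f Hf]], e' as [x' [f' Hf']]; simpl; intros <- Hff.
  assert (f = f').
  { apply functional_extensionality_dep; intro u.
    apply functional_extensionality_dep; intro H. apply Hff. }
  subst f'. f_equal. f_equal. apply proof_irrelevance.
Qed.

Lemma fun_of_irrel (e e' : expN) u u' H H' : e = e' -> u = u' -> fun_of e u H = fun_of e' u' H'.
Proof. intros <- <-. f_equal. apply proof_irrelevance. Qed.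

Definition PO := pbO expO a.
Definition pi1 : Hom PO expO := pb1 expO a.
Definition pi2 : Hom PO a := pb2 expO a.

Definition evN (u : pbN expO a) : sN b :=
  fun_of (fst (proj1_sig u)) (snd (proj1_sig u)) (proj2_sig u).

Definition evT : Hom (pbT expO a) (projT1 b).
Proof.
  unshelve refine (hom (pbT expO a) (projT1 b) evN _).
  intros u v l H. apply (adjC_mkTS _ (pbE expO a)) in H. destruct H as [H1 H2].
  apply (adjC_mkTS _ expE) in H1. apply H1, H2.
Defined.

Definition ev : Hom PO b.
Proof.
  unshelve refine (slhom PO b evT _).
  intro u. exact (proj2_sig (projT2 (fst (proj1_sig u))) _ _).
Defined.

Section Univ.
Variables (Z Q : S) (q1 : Hom Q Z) (q2 : Hom Q a) (Hq : is_product S q1 q2) (g : Hom Q b).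

Definition Wt z u (H : sp Z z = sp a u) : sN Q :=
  proj1_sig (constructive_indefinite_description _ (@prod_surj Z a Q q1 q2 Hq z u H)).

Lemma Wt_spec z u H : nmap (sh q1) (Wt z u H) = z /\ nmap (sh q2) (Wt z u H) = u.
Proof. unfold Wt. destruct (constructive_indefinite_description _ _) as [w Hw]; exact Hw. Qed.

Lemma hfun_ok z u H : sp b (nmap (sh g) (Wt z u H)) = sp Z z.
Proof.
  rewrite sl_comm, <- (sl_comm q1), (proj1 (Wt_spec z u H)); reflexivity.
Qed.

Definition hnode (z : sN Z) : expN :=
  existT _ (sp Z z) (exist _ (fun u H => nmap (sh g) (Wt z u H)) (hfun_ok z)).

Lemma hnode_hom x y l : adjC (projT1 Z) x y l -> adjC expT (hnode x) (hnode y) l.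
Proof.
  intro H. apply adjC_mkTS. split.
  - apply homA, H.
  - intros u u' Hu Hu' Ha. simpl. apply homA.
    apply (@prod_adj Z a Q q1 q2 Hq).
    + rewrite (proj1 (Wt_spec _ _ Hu)), (proj1 (Wt_spec _ _ Hu')); exact H.
    + rewrite (proj2 (Wt_spec _ _ Hu)), (proj2 (Wt_spec _ _ Hu')); exact Ha.
Qed.

Definition hT : Hom (projT1 Z) expT := hom (projT1 Z) expT hnode hnode_hom.
Definition hS : Hom Z expO := slhom Z expO hT (fun z => eq_refl).

Lemma kok w : sp expO (hnode (nmap (sh q1) w)) = sp a (nmap (sh q2) w).
Proof. change (sp Z (nmap (sh q1) w) = sp a (nmap (sh q2) w)). rewrite !sl_comm; reflexivity. Qed.

Definition kN (w : sN Q) : pbN expO a := exist _ (hnode (nmap (sh q1) w), nmap (sh q2) w) (kok w).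

Definition kT : Hom (projT1 Q) (pbT expO a).
Proof.
  unshelve refine (hom (projT1 Q) (pbT expO a) kN _).
  intros x y l H. apply adjC_mkTS. split; simpl.
  - apply hnode_hom, homA, H.
  - apply homA, H.
Defined.

Definition kS : Hom Q PO.
Proof.
  unshelve refine (slhom Q PO kT _).
  intro w. change (sp Z (nmap (sh q1) w) = sp Q w). apply sl_comm.
Defined.

Lemma univ_exists : comp pi1 kS = comp hS q1 /\ comp pi2 kS = q2 /\ comp ev kS = g.
Proof.
  split; [|split]; apply sl_ext; intro w; try reflexivity.
  change (nmap (sh g) (Wt (nmap (sh q1) w) (nmap (sh q2) w) (kok w)) = nmap (sh g) w).
  f_equal. destruct (Wt_spec (nmap (sh q1) w) (nmap (sh q2) w) (kok w)) as [E1 E2].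
  apply (@prod_inj Z a Q q1 q2 Hq); assumption.
Qed.

Lemma univ_unique (h' : Hom Z expO) :
  (exists k : Hom Q PO, comp pi1 k = comp h' q1 /\ comp pi2 k = q2 /\ comp ev k = g) ->
  h' = hS.
Proof.
  intros [k [E1 [E2 E3]]]. apply sl_ext; intro z. apply expN_eq.
  - exact (sl_comm h' z).
  - intros u H1 H2. change (fun_of (nmap (sh h') z) u H1 = nmap (sh g) (Wt z u H2)).
    destruct (Wt_spec z u H2) as [F1 F2].
    set (w0 := Wt z u H2) in *.
    assert (G1 := sl_eq_nodes E1 w0). assert (G2 := sl_eq_nodes E2 w0). assert (G3 := sl_eq_nodes E3 w0).
    change (fst (proj1_sig (nmap (sh k) w0)) = nmap (sh h') (nmap (sh q1) w0)) in G1.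
    change (snd (proj1_sig (nmap (sh k) w0)) = nmap (sh q2) w0) in G2.
    change (evN (nmap (sh k) w0) = nmap (sh g) w0) in G3.
    rewrite <- G3. unfold evN. apply fun_of_irrel.
    + rewrite G1, F1; reflexivity.
    + rewrite G2, F2; reflexivity.
Qed.

End Univ.

Lemma exp_is_exponential : is_exponential S pi1 pi2 ev.
Proof.
  split; [apply pb_is_product|].
  intros Z Q q1 q2 Hq g. exists (hS Z Q q1 q2 Hq g). split.
  - exists (kS Z Q q1 q2 Hq g). apply univ_exists.
  - intros h' Hh'. apply univ_unique, Hh'.
Qed.

End Exp.

Lemma sl_has_exp : has_exponentials S.
Proof.
  intros a b. exists (expO a b), (PO a b), (pi1 a b), (pi2 a b), (ev a b).
  apply exp_is_exponential.
Qed.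

Lemma sl_ccc : cartesian_closed S.
Proof. split; [apply sl_has_term|split; [apply sl_has_prod|apply sl_has_exp]]. Qed.
End LCC.
End TS.

Theorem theorem6 : forall Sigma : Type, quasitopos (TS_cat Sigma).
Proof.
  intro Sigma. split; [|split; [|split]].
  - split; [apply has_term|split; [apply has_prod|apply has_eq]].
  - split; [apply has_init|split; [apply has_coprod|apply has_coeq]].
  - intro X; apply sl_ccc.
  - apply has_rsc.
Qed.
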